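(* Let $\beta\in(0,2)$ and let $g:\mathbb{R}\to\mathbb{R}$ be measurable such that there exist $K>0$, $\kappa>-1/\beta$ and $\alpha>0$ with $\alpha\beta>2$ and $$|g(x)|\le K\big(x^\kappa\mathbf 1_{[0,1)}(x)+x^{-\alpha}\mathbf 1_{[1,\infty)}(x)\big)\quad\text{for all }x\in\mathbb{R}.$$ Fix $m\in\mathbb{N}$ and define, for $i\in\mathbb{Z}$, $$\rho_i=\int_{\mathbb{R}}|g(x)g(x+i)|^{\beta/2}\,\mathrm{d}x,\qquad \mu_i=\int_{-m}^{\infty}|g(x+i)|^\beta\,\mathrm{d}x.$$ Then there exists a constant $C>0$ such that for every $i\in\mathbb{N}$: (i) $\rho_i\le C\,i^{-\alpha\beta/2}$; (ii) if $i>m$, then $\mu_i\le C\,(i-m)^{1-\alpha\beta}$. *)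

(* Defs.v *)
From HB Require Import structures.
From mathcomp Require Import all_boot all_order all_algebra.
From mathcomp Require Export all_classical all_reals all_analysis.
Set Implicit Arguments.
Unset Strict Implicit.
Unset Printing Implicit Defensive.

(* Main.v *)
Require Import Defs.
From HB Require Import structures.
From mathcomp Require Import all_boot all_order all_algebra.
From mathcomp Require Import all_classical all_reals all_analysis.
From mathcomp Require Import measurable_realfun.
From mathcomp Require Import lra zify ring.
Import Order.TTheory GRing.Theory Num.Theory numFieldNormedType.Exports.
Local Open Scope classical_set_scope.
Local Open Scope ring_scope.

Section Aux.
Context {R : realType}.
Local Notation mu := (@lebesgue_measure R).

Lemma exhaust_bound (D : set R) (f : R -> R) (A : nat -> set R) (c : R) :
  measurable D -> (forall n, measurable (A n)) -> (forall n, A n `<=` D) ->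
  (forall n m, (n <= m)%N -> A n `<=` A m) -> (forall x, D x -> exists n, A n x) ->
  measurable_fun D f -> (forall x, D x -> 0 <= f x) ->
  (forall n, \int[mu]_(x in A n) (f x)%:E <= c%:E)%E ->
  (\int[mu]_(x in D) (f x)%:E <= c%:E)%E.
Proof.
move=> mD mA AD Amon Acov mf f0 Hb.
pose g : nat -> R -> \bar R := fun n => (EFin \o f) \_ (A n).
have mg n : measurable_fun D ((EFin \o f) \_ (A n)).
  apply: (measurable_restrict (EFin \o f) (mA n) mD).1.
  apply: (measurable_funS (E := D)).
  - exact: mD.
  - by move=> x [].
  - by apply/measurable_EFinP.
have g0 n x : D x -> (0 <= g n x)%E.
  by move=> Dx; rewrite /g patchE; case: ifPn => // _; rewrite lee_fin f0.
have gnd x : D x -> {homo g^~ x : n m / (n <= m)%N >-> (n <= m)%E}.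
  move=> Dx n m nm; rewrite /g !patchE; case: ifPn => [|_].
    by rewrite inE => /(Amon _ _ nm) Am; rewrite ifT // inE.
  by case: ifPn => // _; rewrite lee_fin f0.
have -> : (\int[mu]_(x in D) (f x)%:E = \int[mu]_(x in D) limn (g^~ x))%E.
  apply: eq_integral => x; rewrite inE => Dx; apply/esym; apply: cvg_lim => //.
  apply: cvg_near_cst; have [n An] := Acov x Dx.
  near=> k; rewrite /g patchE ifT // inE; apply: Amon An.
  by near: k; exists n.
rewrite monotone_convergence //.
apply: lime_le.
  apply: ereal_nondecreasing_is_cvgn => n m nm.
  apply: ge0_le_integral => //.
  - by move=> x Dx; exact: g0.
  - exact: mg.
  - exact: mg.
  - by move=> x Dx; exact: gnd.
apply: nearW => n.
rewrite -integral_mkcondr setIidr //.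
Unshelve. all: by end_near. Qed.


Lemma powR_cont (q x : R) : 0 < x -> {for x, continuous (fun y : R => y `^ q)}.
Proof.
move=> x0; apply: differentiable_continuous; rewrite -derivable1_diffP.
by apply: derivable_powR; rewrite in_itv/= andbT.
Qed.

Lemma int_pow_seg (q a b : R) : 0 < a -> a < b -> q + 1 != 0 ->
  (\int[mu]_(x in `[a, b]) (x `^ q)%:E =
   ((b `^ (q + 1) - a `^ (q + 1)) / (q + 1))%:E)%E.
Proof.
move=> a0 ab q1.
pose F := (q + 1)^-1 \*: (fun y : R => y `^ (q + 1)).
have dF (x : R) : 0 < x -> is_derive x 1 F ((q+1)^-1 *: ((q + 1) * x `^ (q + 1 - 1))).
  by move=> x0; apply: is_deriveZ; exact: is_derive1_powR.
have cF (x : R) : 0 < x -> {for x, continuous F}.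
  move=> x0; apply: differentiable_continuous; rewrite -derivable1_diffP.
  by have [] := dF x x0.
rewrite (continuous_FTC2 (F := F)) //.
- by rewrite /F /= -EFinB; congr EFin; rewrite -mulrBr mulrC.
- apply: continuous_in_subspaceT => x; rewrite inE /= in_itv /= => /andP[ax _].
  exact: powR_cont (lt_le_trans a0 ax).
- split.
  + move=> x; rewrite in_itv /= => /andP[ax _].
    by have [] := dF x (lt_trans a0 ax).
  + exact/cvg_at_right_filter/cF.
  + exact/cvg_at_left_filter/cF/(lt_trans a0 ab).
- move=> x; rewrite in_itv /= => /andP[ax _].
  have x0 := lt_trans a0 ax.
  rewrite derive1E; have [_ ->] := dF x x0.
  by rewrite addrK /= -[_ *: _]/(_ * _) mulrA mulVf // mul1r.
Qed.

Lemma int01 (q : R) : -1 < q ->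
  (\int[mu]_(x in `]0%R, 1%R]) (x `^ q)%:E <= ((q + 1)^-1)%:E)%E.
Proof.
move=> q1.
have q10 : 0 < q + 1 by rewrite -ltrBlDr sub0r.
apply: (@exhaust_bound _ (fun x : R => x `^ q) (fun n => [set` `[(n.+2%:R)^-1, 1%R]]) _).
- exact: measurable_itv.
- move=> n; exact: measurable_itv.
- move=> n x /=; rewrite !in_itv /= => /andP[h1 ->]; rewrite andbT.
  by apply: lt_le_trans h1; rewrite invr_gt0.
- move=> n m nm x /=; rewrite !in_itv /= => /andP[h1 ->]; rewrite andbT.
  apply: le_trans h1; rewrite lef_pV2 ?posrE // ler_nat; lia.
- move=> x /=; rewrite in_itv /= => /andP[x0 x1].
  exists (Num.truncn x^-1); rewrite /= in_itv /= x1 andbT.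
  rewrite -[leRHS]invrK lef_pV2 ?posrE ?invr_gt0 //.
  apply: ltW; apply: (lt_trans (truncnS_gt _)); by rewrite ltr_nat.
- apply: measurable_funS (measurable_powR _) => //; exact: measurable_itv.
- by move=> x _; exact: powR_ge0.
- move=> n; rewrite int_pow_seg //; last by rewrite gt_eqF.
  + rewrite lee_fin powR1 -[leRHS]mul1r ler_pM2r ?invr_gt0 // gerBl; exact: powR_ge0.
  all: by rewrite ?invr_gt0 ?invf_lt1 ?ltr1n.
Qed.

Lemma inttail (r a : R) : 1 < r -> 0 < a ->
  (\int[mu]_(x in `[a, +oo[) (x `^ (- r))%:E <= (a `^ (1 - r) / (r - 1))%:E)%E.
Proof.
move=> r1 a0.
apply: (@exhaust_bound _ (fun x : R => x `^ (- r)) (fun n => [set` `[a, a + n.+1%:R]]) _).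
- exact: measurable_itv.
- move=> n; exact: measurable_itv.
- by move=> n x /=; rewrite !in_itv /= => /andP[-> _].
- move=> n m nm x /=; rewrite !in_itv /= => /andP[-> h1] /=.
  apply: le_trans h1 _; rewrite lerD2l ler_nat; lia.
- move=> x /=; rewrite in_itv /= andbT => ax.
  exists (Num.truncn (x - a)); rewrite /= in_itv /= ax /=.
  rewrite -lerBlDl; apply: ltW; exact: truncnS_gt.
- apply: measurable_funS (measurable_powR _) => //; exact: measurable_itv.
- by move=> x _; exact: powR_ge0.
- move=> n; rewrite int_pow_seg //; last 2 first.
  + by rewrite ltrDl.
  + by rewrite addrC subr_eq0 eq_sym gt_eqF.
  rewrite lee_fin (addrC (- r)) -[X in _ / X]opprB invrN mulrN -mulNr opprB.
  rewrite ler_pM2r ?invr_gt0 ?subr_gt0 // gerBl; exact: powR_ge0.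
Qed.

Lemma int_pow_seg_s (q a b s : R) : 0 < a + s -> a < b -> q + 1 != 0 ->
  (\int[mu]_(x in `[a, b]) ((x + s) `^ q)%:E =
   (((b + s) `^ (q + 1) - (a + s) `^ (q + 1)) / (q + 1))%:E)%E.
Proof.
move=> a0 ab q1.
have ds (x : R) : is_derive x 1 (fun y : R => y + s) 1.
  by have := is_deriveD (is_derive_id x 1) (is_derive_cst s x 1); rewrite addr0.
have dG (e x : R) : 0 < x + s ->
    is_derive x 1 ((fun y : R => y `^ e) \o (fun y : R => y + s)) (e * (x + s) `^ (e - 1) * 1).
  move=> x0; exact: (@is_derive1_comp R (fun y : R => y `^ e) (fun y : R => y + s) x _ _ (is_derive1_powR e x0) (ds x)).
pose F := (q + 1)^-1 \*: ((fun y : R => y `^ (q + 1)) \o (fun y : R => y + s)).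
have dF (x : R) : 0 < x + s ->
    is_derive x 1 F ((q+1)^-1 *: ((q + 1) * (x + s) `^ (q + 1 - 1) * 1)).
  by move=> x0; apply: is_deriveZ; exact: dG.
have cF (x : R) : 0 < x + s -> {for x, continuous F}.
  move=> x0; apply: differentiable_continuous; rewrite -derivable1_diffP.
  by have [] := dF x x0.
rewrite (continuous_FTC2 (F := F)) //.
- by rewrite /F /= -EFinB; congr EFin; rewrite -mulrBr mulrC.
- apply: continuous_in_subspaceT => x; rewrite inE /= in_itv /= => /andP[ax _].
  have x0 : 0 < x + s by apply: lt_le_trans a0 _; rewrite lerD2r.
  apply: differentiable_continuous; rewrite -derivable1_diffP.
  by have [] := dG q x x0.
- split.
  + move=> x; rewrite in_itv /= => /andP[ax _].
    have x0 : 0 < x + s by apply: lt_trans a0 _; rewrite ltrD2r.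
    by have [] := dF x x0.
  + exact/cvg_at_right_filter/cF.
  + apply/cvg_at_left_filter/cF; apply: lt_trans a0 _; by rewrite ltrD2r.
- move=> x; rewrite in_itv /= => /andP[ax _].
  have x0 : 0 < x + s by apply: lt_trans a0 _; rewrite ltrD2r.
  rewrite derive1E; have [_ ->] := dF x x0.
  by rewrite addrK mulr1 /= -[_ *: _]/(_ * _) mulrA mulVf // mul1r.
Qed.

Lemma inttail_s (r a s : R) : 1 < r -> 0 < a + s ->
  (\int[mu]_(x in `[a, +oo[) ((x + s) `^ (- r))%:E <= ((a + s) `^ (1 - r) / (r - 1))%:E)%E.
Proof.
move=> r1 a0.
apply: (@exhaust_bound _ (fun x : R => (x + s) `^ (- r)) (fun n => [set` `[a, a + n.+1%:R]]) _).
- exact: measurable_itv.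
- move=> n; exact: measurable_itv.
- by move=> n x /=; rewrite !in_itv /= => /andP[-> _].
- move=> n m nm x /=; rewrite !in_itv /= => /andP[-> h1] /=.
  apply: le_trans h1 _; rewrite lerD2l ler_nat; lia.
- move=> x /=; rewrite in_itv /= andbT => ax.
  exists (Num.truncn (x - a)); rewrite /= in_itv /= ax /=.
  rewrite -lerBlDl; apply: ltW; exact: truncnS_gt.
- apply: measurable_funTS.
  apply: (measurableT_comp (measurable_powR _)).
  by apply: measurable_funD => //; exact: measurable_cst.
- by move=> x _; exact: powR_ge0.
- move=> n; rewrite int_pow_seg_s //; last 2 first.
  + by rewrite ltrDl.
  + by rewrite addrC subr_eq0 eq_sym gt_eqF.
  rewrite lee_fin (addrC (- r)) -[X in _ / X]opprB invrN mulrN -mulNr opprB.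
  rewrite ler_pM2r ?invr_gt0 ?subr_gt0 // gerBl; exact: powR_ge0.
Qed.

Lemma int_patch (D : set R) (f : R -> R) :
  (\int[mu]_x ((f \_ D) x)%:E = \int[mu]_(x in D) (f x)%:E)%E.
Proof.
rewrite [RHS]integral_mkcond; apply: eq_integral => x _.
by rewrite !patchE; case: ifP.
Qed.

Lemma powle (x y r : R) : 0 <= r -> 0 <= x -> x <= y -> x `^ r <= y `^ r.
Proof.
move=> r0 x0 xy; apply: (ge0_ler_powR r0) => //; rewrite nnegrE //.
exact: le_trans xy.
Qed.

Lemma powNle (x y a : R) : 0 <= a -> 0 < x -> x <= y -> y `^ (- a) <= x `^ (- a).
Proof.
move=> a0 x0 xy; rewrite !powRN lef_pV2 ?posrE ?powR_gt0 //; last exact: lt_le_trans xy.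
exact: powle (ltW x0) xy.
Qed.
End Aux.
Arguments powle {R x y r}.
Arguments powNle {R x y a}.


Theorem lemmaA1 (R : realType) (beta : R) (g : R -> R) (K kappa alpha : R) (m : nat) :
  0 < beta -> beta < 2 ->
  measurable_fun setT g ->
  0 < K -> - beta^-1 < kappa -> 0 < alpha -> 2 < alpha * beta ->
  (forall x : R, x != 0 ->
     `|g x| <= K * ((if (0 <= x) && (x < 1) then x `^ kappa else 0)
                   + (if 1 <= x then x `^ (- alpha) else 0))) ->
  exists C : R, 0 < C /\
    forall i : nat, (0 < i)%N ->
      (\int[lebesgue_measure]_(x in [set: R])
          (`|g x * g (x + i%:R)| `^ (beta / 2))%:E
         <= (C * i%:R `^ (- (alpha * beta / 2)))%:E)%E
      /\ ((m < i)%N ->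
      (\int[lebesgue_measure]_(x in [set x : R | (- (m%:R) <= x)%R])
          (`|g (x + i%:R)| `^ beta)%:E
         <= (C * (i%:R - m%:R) `^ (1 - alpha * beta))%:E)%E).
Proof.
move=> b0 b2 mg K0 kap a0 ab Hg.
set p := beta / 2.
have p0 : 0 < p by rewrite divr_gt0.
have pn0 : p != 0 by rewrite gt_eqF.
have gneg x : x < 0 -> g x = 0.
  move=> x0; have := Hg x (negbT (lt_eqF x0)).
  rewrite [0 <= x]leNgt x0 [1 <= x]leNgt (lt_trans x0 ltr01) /= addr0 mulr0.
  by rewrite normr_le0 => /eqP.
have gbig x : 1 <= x -> `|g x| <= K * x `^ (- alpha).
  move=> x1; have := Hg x (negbT (gt_eqF (lt_le_trans ltr01 x1))).
  by rewrite x1 ltNge x1 andbF add0r.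
have gsmall x : 0 < x -> x < 1 -> `|g x| <= K * x `^ kappa.
  move=> x0 x1; have := Hg x (negbT (gt_eqF x0)).
  by rewrite (ltW x0) x1 /= [1 <= x]leNgt x1 /= addr0.
pose P1 : R -> R := (fun x => x `^ (kappa * p)) \_ [set` `]0%R, 1%R]].
pose P2 : R -> R := (fun x => x `^ (- (alpha * p))) \_ [set` `[1%R, +oo[].
have P1ge0 x : 0 <= P1 x by rewrite /P1 patchE; case: ifP => // _; exact: powR_ge0.
have P2ge0 x : 0 <= P2 x by rewrite /P2 patchE; case: ifP => // _; exact: powR_ge0.
have gp x : x != 0 -> `|g x| `^ p <= K `^ p * (P1 x + P2 x).
  move=> xn0; have [x0|x0] := ltP x 0.
    by rewrite gneg // normr0 powR0 // mulr_ge0 ?powR_ge0 ?addr_ge0.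
  have {xn0 x0} x0 : 0 < x by rewrite lt_neqAle eq_sym xn0 x0.
  have [x1|x1] := ltP x 1.
    have -> : P1 x = x `^ (kappa * p).
      by rewrite /P1 patchE ifT // inE /= in_itv /= x0 ltW.
    have -> : P2 x = 0.
      by rewrite /P2 patchE ifF //; apply/negbTE; rewrite mem_setE in_itv /= andbT -ltNge.
    rewrite addr0 powRrM -powRM ?powR_ge0 ?(ltW K0) //.
    exact: powle (ltW p0) (normr_ge0 _) (gsmall x x0 x1).
  have -> : P2 x = x `^ (- (alpha * p)).
    by rewrite /P2 patchE ifT // inE /= in_itv /= x1.
  have h : x `^ (- (alpha * p)) <= P1 x + x `^ (- (alpha * p)) by rewrite lerDr.
  apply: le_trans (ler_wpM2l (powR_ge0 _ _) h).
  rewrite -mulNr (powRrM x) -powRM ?powR_ge0 ?(ltW K0) //.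
  exact: powle (ltW p0) (normr_ge0 _) (gbig x x1).
have mP1 : measurable_fun setT P1.
  apply/(measurable_restrictT _ _).1; first exact: measurable_itv.
  exact: measurable_funTS (measurable_powR _).
have mP2 : measurable_fun setT P2.
  apply/(measurable_restrictT _ _).1; first exact: measurable_itv.
  exact: measurable_funTS (measurable_powR _).
have kp1 : -1 < kappa * p.
  have : - beta^-1 * p < kappa * p by rewrite ltr_pM2r.
  apply: le_lt_trans; rewrite /p mulrA mulNr mulVf ?gt_eqF // mulNr mul1r lerN2 invf_le1 // ler1n //.
have ap1 : 1 < alpha * p.
  by rewrite /p mulrA ltr_pdivlMr // mul1r.
pose M1 := (kappa * p + 1)^-1 + (alpha * p - 1)^-1.
have intP : (\int[lebesgue_measure]_x ((P1 x + P2 x)%:E) <= M1%:E)%E.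
  under eq_integral do rewrite EFinD.
  rewrite ge0_integralD //; last 4 first.
  - by move=> x _; rewrite lee_fin.
  - exact/measurable_EFinP.
  - by move=> x _; rewrite lee_fin.
  - exact/measurable_EFinP.
  rewrite /P1 /P2 !int_patch /M1 EFinD; apply: leeD; first exact: int01.
  by have := @inttail R _ _ ap1 ltr01; rewrite powR1 /= mul1r.
have mD0 : measurable ([set: R] `\ 0%R).
  by apply: measurableD => //; exact: measurable_set1.
have part1 (i : nat) : (0 < i)%N ->
  (\int[lebesgue_measure]_(x in [set: R]) (`|g x * g (x + i%:R)| `^ p)%:E
   <= (K `^ p * (K `^ p * i%:R `^ (- (alpha * p))) * M1)%:E)%E.
  move=> i0.
  have i1 : 1 <= i%:R :> R by rewrite ler1n.
  set c := K `^ p * i%:R `^ (- (alpha * p)).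
  have mphi : measurable_fun setT (fun x => `|g x * g (x + i%:R)| `^ p).
    apply: (measurableT_comp (measurable_powR p)).
    apply: measurableT_comp; first exact: normr_measurable.
    apply: measurable_funM => //.
    apply: (measurableT_comp mg).
    by apply: measurable_funD => //; exact: measurable_cst.
  have bnd x : x != 0 -> `|g x * g (x + i%:R)| `^ p <= (K `^ p * c) * (P1 x + P2 x).
    move=> xn0; rewrite normrM powRM //.
    have [x0|x0] := ltP x 0.
      by rewrite gneg // normr0 powR0 // mul0r !mulr_ge0 ?powR_ge0 ?addr_ge0.
    have {xn0 x0} x0 : 0 < x by rewrite lt_neqAle eq_sym xn0 x0.
    rewrite mulrAC; apply: ler_pM; [exact: powR_ge0|exact: powR_ge0|by apply: gp; rewrite gt_eqF|].
    have xi1 : 1 <= x + i%:R by apply: le_trans i1 _; rewrite lerDr ltW.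
    apply: le_trans (powle (ltW p0) (normr_ge0 _) (gbig _ xi1)) _.
    rewrite powRM ?powR_ge0 ?(ltW K0) // /c; apply: ler_wpM2l; first exact: powR_ge0.
    rewrite -mulNr (powRrM i%:R); apply: powle (ltW p0) (powR_ge0 _ _) _.
    by apply: powNle (ltW a0) (lt_le_trans ltr01 i1) _; rewrite lerDr ltW.
  have mB : measurable_fun setT (fun x => K `^ p * c * (P1 x + P2 x)).
    apply: measurable_funM; first exact: measurable_cst.
    exact: measurable_funD.
  rewrite -(@integral_setD1 R _ 0 setT mD0); last first.
    exact/measurable_EFinP/measurable_funTS.
  apply: le_trans (_ : _ <= \int[lebesgue_measure]_(x in [set: R] `\ 0%R)
                      ((K `^ p * c) * (P1 x + P2 x))%:E)%E _.
    apply: ge0_le_integral => //.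
    - exact/measurable_EFinP/measurable_funTS.
    - exact/measurable_EFinP/measurable_funTS.
    - by move=> x [_ xn0]; rewrite lee_fin bnd //; apply/eqP.
  rewrite (@integral_setD1 R (fun x => ((K `^ p * c) * (P1 x + P2 x))%:E) 0 setT mD0);
    last exact/measurable_EFinP/measurable_funTS.
  under eq_integral do rewrite EFinM.
  rewrite ge0_integralZl_EFin //; last 3 first.
  - by move=> x _; rewrite lee_fin addr_ge0.
  - exact/measurable_EFinP/measurable_funD.
  - by rewrite !mulr_ge0 ?powR_ge0.
  rewrite !EFinM; apply: lee_wpmul2l => //; rewrite -EFinM lee_fin !mulr_ge0 ?powR_ge0 //.
have ab1 : 1 < alpha * beta by apply: lt_trans ab; rewrite ltr1n.
pose C2 := K `^ beta / (alpha * beta - 1).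
have part2 (i : nat) : (m < i)%N ->
  (\int[lebesgue_measure]_(x in [set x : R | (- (m%:R) <= x)%R])
      (`|g (x + i%:R)| `^ beta)%:E
   <= (C2 * (i%:R - m%:R) `^ (1 - alpha * beta))%:E)%E.
  move=> mi.
  have im1 : 1 <= i%:R - m%:R :> R.
    by rewrite -natrB ?ler1n ?subn_gt0 // ltnW.
  have -> : [set x : R | - (m%:R) <= x] = [set` `[- (m%:R), +oo[].
    by apply/seteqP; split => x /=; rewrite in_itv /= andbT.
  apply: le_trans (_ : _ <= \int[lebesgue_measure]_(x in `[(- (m%:R))%R, +oo[)
      (K `^ beta * (x + i%:R) `^ (- (alpha * beta)))%:E)%E _.
    apply: ge0_le_integral => //.
    - apply/measurable_EFinP/measurable_funTS.
      apply: (measurableT_comp (measurable_powR _)).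
      apply: measurableT_comp; first exact: normr_measurable.
      apply: (measurableT_comp mg).
      by apply: measurable_funD => //; exact: measurable_cst.
    - apply/measurable_EFinP/measurable_funTS.
      apply: measurable_funM; first exact: measurable_cst.
      apply: (measurableT_comp (measurable_powR _)).
      by apply: measurable_funD => //; exact: measurable_cst.
    - move=> x /=; rewrite in_itv /= andbT => mx; rewrite lee_fin.
      have xi1 : 1 <= x + i%:R.
        apply: le_trans im1 _; by rewrite [x + _]addrC lerD2l.
      apply: le_trans (powle (ltW b0) (normr_ge0 _) (gbig _ xi1)) _.
      by rewrite powRM ?powR_ge0 ?(ltW K0) // -powRrM mulNr.
  under eq_integral do rewrite EFinM.
  rewrite ge0_integralZl_EFin //; last 3 first.
  - by move=> x _; rewrite lee_fin powR_ge0.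
  - apply/measurable_EFinP/measurable_funTS.
    apply: (measurableT_comp (measurable_powR _)).
    by apply: measurable_funD => //; exact: measurable_cst.
  - exact: powR_ge0.
  have mi0 : 0 < - (m%:R) + i%:R :> R by rewrite addrC; apply: lt_le_trans im1.
  apply: le_trans (lee_wpmul2l _ (@inttail_s R _ _ _ ab1 mi0)) _.
    by rewrite lee_fin powR_ge0.
  have -> : (- (m%:R) + i%:R) = i%:R - m%:R :> R by rewrite addrC.
  by rewrite -EFinM lee_fin /C2 mulrCA mulrC.
have M1gt0 : 0 < M1.
  by rewrite /M1 addr_gt0 // invr_gt0 ?subr_gt0 // -ltrBlDr sub0r.
have C2ge0 : 0 <= C2.
  by rewrite /C2 divr_ge0 ?powR_ge0 // subr_ge0 ltW.
exists (K `^ p * K `^ p * M1 + C2); split.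
  by rewrite ltr_wpDr // !mulr_gt0 // powR_gt0.
move=> i i0; split.
  apply: le_trans (part1 i i0) _; rewrite lee_fin.
  have -> : alpha * beta / 2 = alpha * p by rewrite /p mulrA.
  set I := i%:R `^ _.
  have -> : K `^ p * (K `^ p * I) * M1 = K `^ p * K `^ p * M1 * I by ring.
  by apply: ler_wpM2r; [exact: powR_ge0|rewrite lerDl].
move=> mi; apply: le_trans (part2 i mi) _; rewrite lee_fin.
by apply: ler_wpM2r; [exact: powR_ge0|rewrite lerDr !mulr_ge0 ?powR_ge0 ?ltW].
Qed.
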